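(* For every integer $d \ge 1$, every monoid in $\mathcal{C}_d$ is isomorphic to an additive submonoid of $\mathbb{N}^d$ of rank $d$.
   Context: All monoids are commutative, cancellative and reduced (the only invertible element is the identity). $\mathbb{N} = \{0,1,2,\dots\}$. For a monoid $H$, $\mathrm{gp}(H)$ denotes its Grothendieck (difference) group, and the rank of $H$ is the rank of the abelian group $\mathrm{gp}(H)$, i.e. $\dim_{\mathbb{Q}} \mathbb{Q}\otimes_{\mathbb{Z}} \mathrm{gp}(H)$. For $d \ge 1$, $\mathcal{C}_d$ denotes the collection of all rank-$d$ submonoids of free commutative monoids of finite rank. *)

(* Defs.v *)
From HB Require Import structures.
From mathcomp Require Import all_boot all_order all_algebra.
Set Implicit Arguments. Unset Strict Implicit. Unset Printing Implicit Defensive.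
Import GRing.Theory.
Local Open Scope ring_scope.

Definition natvec (n : nat) := {ffun 'I_n -> nat}.

Definition nv_zero (n : nat) : natvec n := [ffun => 0%N].
Definition nv_add (n : nat) (x y : natvec n) : natvec n := [ffun i => (x i + y i)%N].

Definition is_submonoid (n : nat) (H : natvec n -> Prop) : Prop :=
  H (nv_zero n) /\ (forall x y, H x -> H y -> H (nv_add x y)).

(* Embedding of N^n into Q^n. gp(H) is the subgroup of Z^n generated by H,
   so Q (x) gp(H) is the Q-span of H inside Q^n. *)
Definition nv_toQ (n : nat) (x : natvec n) : 'rV[rat]_n := \row_i ((x i)%:R).

Definition has_rank (n : nat) (H : natvec n -> Prop) (d : nat) : Prop :=
  (exists s : seq (natvec n),
      (forall x, x \in s -> H x) /\ \dim <<map (@nv_toQ n) s>>%VS = d) /\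
  (forall s : seq (natvec n),
      (forall x, x \in s -> H x) -> (\dim <<map (@nv_toQ n) s>>%VS <= d)%N).

Definition monoid_iso (n m : nat) (H : natvec n -> Prop) (K : natvec m -> Prop)
  : Prop :=
  exists f : natvec n -> natvec m,
    [/\ (forall x, H x -> K (f x)),
        f (nv_zero n) = nv_zero m,
        (forall x y, H x -> H y -> f (nv_add x y) = nv_add (f x) (f y)),
        (forall x y, H x -> H y -> f x = f y -> x = y)
      & (forall z, K z -> exists2 x, H x & f x = z)].

(* Main.v *)
Require Import Defs.
From mathcomp Require Import all_boot all_order all_algebra.
Set Implicit Arguments. Unset Strict Implicit. Unset Printing Implicit Defensive.
Import GRing.Theory.
Local Open Scope ring_scope.

Lemma core n (V : {vspace 'rV[rat]_n}) :
  exists f : 'I_(\dim V) -> 'I_n,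
    forall v, v \in V -> colsub f v = 0 -> v = 0.
Proof.
set b := vbasis V.
pose B : 'M[rat]_(\dim V, n) := \matrix_(i, j) (b`_i) 0 j.
have rowB i : row i B = b`_i by apply/rowP => j; rewrite !mxE.
have vB (c : 'rV_(\dim V)) : c *m B = \sum_i c 0 i *: b`_i.
  by rewrite mulmx_sum_row; apply: eq_bigr => i _; rewrite rowB.
have frB : row_free B.
  apply: inj_row_free => c; rewrite vB => h.
  move/freeP: (basis_free (vbasisP V)) => /(_ _ h) h2.
  by apply/rowP => i; rewrite h2 mxE.
have rkA : row_full B^T by rewrite /row_full mxrank_tr (eqP frB).
pose f := fullrankfun rkA.
have CU : colsub f B \in unitmx.
  rewrite -unitmx_tr.
  have -> : (colsub f B)^T = rowsub f B^T by apply/matrixP => i j; rewrite !mxE.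
  exact: fullrowsub_unit.
exists f => v vV h.
pose c : 'rV_(\dim V) := \row_i coord b i v.
have vc : v = c *m B by rewrite vB (coord_vbasis vV); apply: eq_bigr => i _; rewrite mxE.
have : c *m colsub f B = 0 *m colsub f B by rewrite mulmx_colsub -vc h mul0mx.
have fC : row_free (colsub f B) by rewrite row_free_unit.
by move/(row_free_inj fC) => c0; rewrite vc c0 mul0mx.
Qed.

Lemma core' n (V : {vspace 'rV[rat]_n}) d : \dim V = d ->
  exists f : 'I_d -> 'I_n,
    forall v, v \in V -> colsub f v = 0 -> v = 0.
Proof. by move=> <-; exact: core. Qed.

Theorem lemma4p1 :
  forall (d : nat), (1 <= d)%N ->
  forall (n : nat) (H : natvec n -> Prop),
    is_submonoid H -> has_rank H d ->
    exists K : natvec d -> Prop,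
      [/\ is_submonoid K, has_rank K d & monoid_iso H K].
Proof.
move=> d _ n H [H0 Hadd] [[s0 [s0H dimS]] Hmax].
set V := <<map (@nv_toQ n) s0>>%VS.
have HV x : H x -> nv_toQ x \in V.
  move=> hx.
  have le : (\dim <<map (@nv_toQ n) (x :: s0)>> <= d)%N.
    by apply: Hmax => y; rewrite inE => /orP[/eqP -> | /s0H].
  have sub : (V <= <<map (@nv_toQ n) (x :: s0)>>)%VS by rewrite /= span_cons addvSr.
  have /eqP eq : V == <<map (@nv_toQ n) (x :: s0)>>%VS.
    by rewrite eqEdim sub /= dimS.
  by rewrite eq memv_span //= mem_head.
have [f Hf] := core' dimS.
pose proj (x : natvec n) : natvec d := [ffun j => x (f j)].
have toQproj x : nv_toQ (proj x) = colsub f (nv_toQ x).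
  by apply/rowP => j; rewrite !mxE ffunE.
pose K z := exists2 x, H x & proj x = z.
exists K; split.
- split.
    by exists (nv_zero n) => //; apply/ffunP => j; rewrite !ffunE.
  move=> _ _ [x hx <-] [y hy <-]; exists (nv_add x y); first exact: Hadd.
  by apply/ffunP => j; rewrite !ffunE.
- split.
    exists (map proj s0); split.
      by move=> z /mapP [x xs ->]; exists x => //; exact: s0H.
    pose P : 'M[rat]_(n, d) := colsub f 1%:M.
    pose g : 'Hom('rV[rat]_n, 'rV[rat]_d) := linfun (mulmxr P).
    have gE (v : 'rV[rat]_n) : g v = colsub f v by rewrite lfunE /= mulmx_colsub mulmx1.
    have -> : map (@nv_toQ d) (map proj s0) = map g (map (@nv_toQ n) s0).
      by rewrite -!map_comp; apply: eq_map => x /=; rewrite gE toQproj.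
    rewrite -limg_span limg_dim_eq ?dimS //.
    apply/eqP; rewrite -subv0; apply/subvP => v.
    rewrite memv_cap memv_ker => /andP[vV /eqP gv]; rewrite memv0; apply/eqP.
    by apply: Hf => //; rewrite -gE.
  move=> s _; apply: leq_trans (dimvS (subvf _)) _.
  by rewrite dimvf /dim /= mul1n.
- exists proj; split.
  + by move=> x hx; exists x.
  + by apply/ffunP => j; rewrite !ffunE.
  + by move=> x y _ _; apply/ffunP => j; rewrite !ffunE.
  + move=> x y hx hy e.
    have : nv_toQ x - nv_toQ y = 0.
      apply: Hf; first by rewrite memvB // HV.
      have -> : colsub f (nv_toQ x - nv_toQ y) = colsub f (nv_toQ x) - colsub f (nv_toQ y).
        by apply/rowP => j; rewrite !mxE.
      by rewrite -!toQproj e subrr.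
    move/eqP; rewrite subr_eq0 => /eqP ex.
    apply/ffunP => i; have := congr1 (fun v : 'rV[rat]_n => v 0 i) ex.
    by rewrite /= !mxE => /eqP; rewrite Num.Theory.eqr_nat => /eqP.
  + by move=> z [x hx <-]; exists x.
Qed.
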